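(* Let $n,m,N$ be positive integers, let $A_0,\ldots,A_m\in\mathbb{R}^{n\times n}$, let $\tau_0=0$ and $\tau_1,\ldots,\tau_m>0$, and put $\tau_{\max}=\max_i\tau_i$. Let $\theta_{N,-N},\ldots,\theta_{N,0}$ be $N+1$ distinct points of $[-\tau_{\max},0]$ with $\theta_{N,0}=0$, let $l_{N,k}$ ($k=-N,\ldots,0$) be the corresponding Lagrange polynomials of degree $N$ ($l_{N,k}(\theta_{N,i})=1$ if $i=k$ and $0$ otherwise), and let $d_{i,k}=l_{N,k}'(\theta_{N,i})$. Define the $(N+1)n\times(N+1)n$ block matrix ${\bf A_N}$ whose block rows indexed by $i=-N,\ldots,-1$ are $[d_{i,-N}I_n\ \cdots\ d_{i,-1}I_n\ \ d_{i,0}I_n]$ and whose last block row is $[\Gamma_{-N}\ \cdots\ \Gamma_{-1}\ \Gamma_0]$, where $\Gamma_0=A_0+\sum_{l=1}^m A_l\,l_{N,0}(-\tau_l)$ and $\Gamma_k=\sum_{l=1}^m A_l\,l_{N,k}(-\tau_l)$ for $k=-N,\ldots,-1$; and let ${\bf B_N}=[0_n\ \cdots\ 0_n\ I_n]^*\in\mathbb{R}^{(N+1)n\times n}$. For $\lambda\in\mathbb{C}$ let $p_N(\cdot;\lambda)$ be the polynomial of degree (at most) $N$ with $p_N(0;\lambda)=1$ and $p_N'(\theta_{N,i};\lambda)=\lambda\,p_N(\theta_{N,i};\lambda)$ for $i=-N,\ldots,-1$. Then, as matrix-valued functions of $\lambda$ (at every $\lambda$ where both sides are defined), $$ {\bf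 B_N}^*(\lambda I_{(N+1)n}-{\bf A_N})^{-1}{\bf B_N}=\Big(\lambda I_n-A_0-\sum_{i=1}^m A_i\,p_N(-\tau_i;\lambda)\Big)^{-1}. $$
   Context: ${\bf A_N},{\bf B_N}$ describe a spectral (collocation) discretization of the delay system $\dot x(t)=\sum_{i=0}^m A_ix(t-\tau_i)+u(t)$, $y=x$. The superscript $*$ denotes conjugate transpose. *)

(* Defs.v *)
From HB Require Import structures.
From mathcomp Require Import all_boot all_order all_algebra.
From mathcomp Require Import complex.
Set Implicit Arguments. Unset Strict Implicit. Unset Printing Implicit Defensive.
Import Order.TTheory GRing.Theory Num.Theory.
Local Open Scope ring_scope.
Local Open Scope complex_scope.

(* Nodes are indexed by j : 'I_N.+1, where j corresponds to k = j - N
   (so ord_max corresponds to k = 0). *)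

Definition lagrange (R : fieldType) (N : nat) (theta : 'I_N.+1 -> R)
    (k : 'I_N.+1) : {poly R} :=
  \prod_(j < N.+1 | j != k) ((theta k - theta j)^-1 *: ('X - (theta j)%:P)).

Definition dcoef (R : fieldType) (N : nat) (theta : 'I_N.+1 -> R)
    (i k : 'I_N.+1) : R := ((lagrange theta k)^`()).[theta i].

Definition Gamma (R : fieldType) (n m N : nat) (theta : 'I_N.+1 -> R)
    (A : 'I_m.+1 -> 'M[R]_n) (tau : 'I_m.+1 -> R) (k : 'I_N.+1) : 'M[R]_n :=
  (if k == ord_max then A ord0 else 0)
  + \sum_(l < m.+1 | l != ord0) ((lagrange theta k).[- tau l] *: A l).

Definition tau_max (R : realDomainType) (m : nat) (tau : 'I_m.+1 -> R) : R :=
  \big[Num.max/0]_(i < m.+1) tau i.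

Definition AN (R : fieldType) (n m N : nat) (theta : 'I_N.+1 -> R)
    (A : 'I_m.+1 -> 'M[R]_n) (tau : 'I_m.+1 -> R)
    : 'M[R]_(\sum_(i < N.+1) n, \sum_(j < N.+1) n) :=
  \mxblock_(i < N.+1, j < N.+1)
     (if i == ord_max then Gamma theta A tau j
      else (dcoef theta i j)%:M : 'M[R]_n).

Definition BN (R : fieldType) (n N : nat) : 'M[R]_(\sum_(i < N.+1) n, n) :=
  \mxcol_(i < N.+1) (if i == ord_max then 1%:M else 0 : 'M[R]_n).

Definition cmx (R : rcfType) (p q : nat) (M : 'M[R]_(p, q)) : 'M[R[i]]_(p, q) :=
  map_mx (fun x => x%:C) M.

Definition ctr (R : rcfType) (p q : nat) (M : 'M[R[i]]_(p, q)) : 'M[R[i]]_(q, p) :=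
  map_mx (@conjc R) M^T.

Definition is_pN (R : rcfType) (N : nat) (theta : 'I_N.+1 -> R) (lam : R[i])
    (p : {poly R[i]}) : Prop :=
  [/\ (size p <= N.+1)%N, p.[0] = 1 &
      forall j : 'I_N.+1, j != ord_max ->
        (p^`()).[(theta j)%:C] = lam * p.[(theta j)%:C]].

(* Main.v *)
From Pilot Require Import Defs.
From HB Require Import structures.
From mathcomp Require Import all_boot all_order all_algebra.
From mathcomp Require Import complex zify.
Import Order.TTheory GRing.Theory Num.Theory.
Local Open Scope ring_scope.
Local Open Scope complex_scope.
Local Notation lag := Pilot.Defs.lagrange.
Section Lag.
Variables (F : fieldType) (N : nat) (x : 'I_N.+1 -> F).
Hypothesis xi : injective x.

Lemma lag_eval (i k : 'I_N.+1) : (lag x k).[x i] = (i == k)%:R.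
Proof.
rewrite /lagrange horner_prod.
under eq_bigr => j _ do rewrite hornerZ hornerXsubC.
have [<-|ne] := eqVneq i k.
  by apply: big1 => j ji; rewrite mulVf // subr_eq0 (inj_eq xi) eq_sym.
by rewrite (bigD1 i) //= subrr mulr0 mul0r.
Qed.

Lemma lag_size (k : 'I_N.+1) : (size (lag x k) <= N.+1)%N.
Proof.
have H : forall j, j != k -> size ((x k - x j)^-1 *: ('X - (x j)%:P)) = 2%N.
  by move=> j jk; rewrite size_scale ?size_XsubC // invr_eq0 subr_eq0 (inj_eq xi) eq_sym.
rewrite /lagrange size_prod; last by move=> j jk; rewrite -size_poly_eq0 H.
rewrite (eq_bigr (fun=> 2%N) H) sum_nat_const cardC1 card_ord /=.
lia.
Qed.

Lemma lag_interp (q : {poly F}) : (size q <= N.+1)%N ->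
  q = \sum_(j < N.+1) q.[x j] *: lag x j.
Proof.
move=> sq; apply/eqP; rewrite -subr_eq0; apply/eqP.
apply: (@roots_geq_poly_eq0 _ _ (map x (enum 'I_N.+1))).
- apply/allP => _ /mapP [i _ ->]; rewrite /root hornerD hornerN horner_sum.
  under eq_bigr do rewrite hornerZ lag_eval.
  rewrite (bigD1 i) //= eqxx mulr1 big1 ?addr0 ?subrr //.
  by move=> j; rewrite eq_sym => /negbTE ->; rewrite mulr0.
- by rewrite map_inj_uniq ?enum_uniq.
- rewrite size_map size_enum_ord; apply: leq_trans (size_polyD _ _) _.
  rewrite geq_max size_polyN sq /=.
  apply: (big_ind (fun r : {poly F} => size r <= N.+1)%N).
  + by rewrite size_poly0.
  + by move=> a b ha hb; apply: leq_trans (size_polyD _ _) _; rewrite geq_max ha hb.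
  + by move=> j _; apply: leq_trans (size_scale_leq _ _) (lag_size j).
Qed.
End Lag.

Section Cmx.
Variable R : rcfType.
Local Notation rc := (real_complex R).

Lemma cmxD p q (A B : 'M[R]_(p, q)) : cmx (A + B) = cmx A + cmx B.
Proof. by apply/matrixP => i j; rewrite !mxE rmorphD. Qed.

Lemma cmx0 p q : cmx (0 : 'M[R]_(p, q)) = 0.
Proof. by apply/matrixP => i j; rewrite !mxE. Qed.

Lemma cmxZ p q a (A : 'M[R]_(p, q)) : cmx (a *: A) = a%:C *: cmx A.
Proof. by apply/matrixP => i j; rewrite !mxE rmorphM. Qed.

Lemma cmx_sum p q (I : finType) (P : pred I) (F : I -> 'M[R]_(p, q)) :
  cmx (\sum_(i | P i) F i) = \sum_(i | P i) cmx (F i).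
Proof.
apply: (big_ind2 (fun a b => cmx a = b)); first exact: cmx0.
  by move=> a b c d <- <-; rewrite cmxD.
by [].
Qed.

Lemma cmx_scalar p a : cmx (a%:M : 'M[R]_p) = (a%:C)%:M.
Proof. by apply/matrixP => i j; rewrite !mxE rmorphMn. Qed.

Lemma ctr_cmx p q (A : 'M[R]_(p, q)) : ctr (cmx A) = cmx A^T.
Proof. by apply/matrixP => i j; rewrite !mxE conjc_real. Qed.

Lemma cmx_mxblock N n (B : 'I_N -> 'I_N -> 'M[R]_n) :
  cmx (\mxblock_(i < N, j < N) B i j) = \mxblock_(i < N, j < N) cmx (B i j).
Proof. by apply/matrixP => i j; rewrite !mxE. Qed.

Lemma cmx_mxcol N n q (B : 'I_N -> 'M[R]_(n, q)) :
  cmx (\mxcol_(i < N) B i) = \mxcol_(i < N) cmx (B i).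
Proof. by apply/matrixP => i j; rewrite !mxE. Qed.

Lemma cmx_mxrow N n q (B : 'I_N -> 'M[R]_(q, n)) :
  cmx (\mxrow_(i < N) B i) = \mxrow_(i < N) cmx (B i).
Proof. by apply/matrixP => i j; rewrite !mxE. Qed.
End Cmx.

Lemma scalar_mxblock (T : pzRingType) N n (a : T) :
  (a%:M : 'M[T]_(\sum_(i < N) n)) =
  \mxblock_(i < N, j < N) (if i == j then a%:M else 0 : 'M[T]_n).
Proof.
apply/mxblockP => i j; rewrite mxblockK; apply/matrixP => k l; rewrite !mxE.
rewrite -val_eqE /= tagnat.eq_Rank.
by case: (i == j); rewrite !mxE //= mulr0n.
Qed.

Theorem theorem1 (R : rcfType) (n m N : nat)
  (Hn : (0 < n)%N) (Hm : (0 < m)%N) (HN : (0 < N)%N)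
  (A : 'I_m.+1 -> 'M[R]_n) (tau : 'I_m.+1 -> R)
  (Htau0 : tau ord0 = 0) (Htau : forall l : 'I_m.+1, l != ord0 -> 0 < tau l)
  (theta : 'I_N.+1 -> R) (Htheta_inj : injective theta)
  (Htheta_rng : forall j, - tau_max tau <= theta j <= 0)
  (Htheta0 : theta ord_max = 0)
  (lam : R[i]) (p : {poly R[i]})
  (Hp : is_pN theta lam p)
  (Hp_uniq : forall q : {poly R[i]}, is_pN theta lam q -> q = p)
  (HL : lam%:M - cmx (AN theta A tau) \in unitmx)
  (HR : lam%:M - cmx (A ord0)
          - \sum_(l < m.+1 | l != ord0) (p.[(- tau l)%:C] *: cmx (A l))
        \in unitmx) :
  ctr (cmx (BN R n N)) *m invmx (lam%:M - cmx (AN theta A tau)) *m cmx (BN R n N)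
  = invmx (lam%:M - cmx (A ord0)
           - \sum_(l < m.+1 | l != ord0) (p.[(- tau l)%:C] *: cmx (A l))).
Proof.
set S := lam%:M - cmx (A ord0) - \sum_(l < m.+1 | l != ord0) (p.[(- tau l)%:C] *: cmx (A l)).
set M := lam%:M - cmx (AN theta A tau).
pose thC j := (theta j)%:C.
have thC_inj : injective thC by move=> a b /complexI /Htheta_inj.
case: Hp => sp p0 pd.
have Hint := @lag_interp _ _ thC thC_inj p sp.
have lagmap : forall j, map_poly (real_complex R) (lag theta j) = lag thC j.
  move=> j; rewrite /Defs.lagrange rmorph_prod; apply: eq_bigr => k _.
  by rewrite /= map_polyZ map_polyXsubC fmorphV rmorphB.
have Heval : forall a, \sum_(j < N.+1) p.[thC j] * ((lag theta j).[a])%:C = p.[a%:C].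
  move=> a; rewrite {2}Hint horner_sum; apply: eq_bigr => j _.
  by rewrite hornerZ -lagmap horner_map.
have Hder : forall i, \sum_(j < N.+1) p.[thC j] * (dcoef theta i j)%:C = p^`().[thC i].
  move=> i; rewrite {2}Hint raddf_sum horner_sum; apply: eq_bigr => j _.
  by rewrite /= derivZ hornerZ -lagmap deriv_map horner_map.
pose X := \mxcol_(j < N.+1) ((p.[thC j])%:M : 'M[R[i]]_n).
have Key : M *m X = cmx (BN R n N) *m S.
  rewrite /M /AN cmx_mxblock scalar_mxblock -mxblockB /X mul_mxblock_mxrow.
  rewrite /BN cmx_mxcol mxcol_mul; apply: eq_mxcol => i.
  under eq_bigr do rewrite mul_mx_scalar.
  case: (eqVneq i ord_max) => [->|ne].
    rewrite cmx_scalar rmorph1 mul1mx.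
    under eq_bigr do rewrite scalerBr.
    rewrite sumrB (bigD1 ord_max) //= eqxx big1 ?addr0; last first.
      by move=> j /negbTE; rewrite eq_sym => ->; rewrite scaler0.
    rewrite /thC Htheta0 p0 scale1r /S -addrA -opprD; congr (_ - _).
    under eq_bigr do rewrite /Gamma cmxD cmx_sum scalerDr.
    rewrite big_split /=; congr (_ + _).
      rewrite (bigD1 ord_max) //= eqxx big1 ?addr0; last first.
        by move=> j /negbTE ->; rewrite cmx0 scaler0.
      by rewrite Htheta0 p0 scale1r.
    under eq_bigr do rewrite scaler_sumr.
    rewrite exchange_big /=; apply: eq_bigr => l _.
    under eq_bigr do rewrite cmxZ scalerA.
    by rewrite -scaler_suml Heval.
  rewrite cmx0 mul0mx.
  rewrite (eq_bigr (fun j => (p.[thC j] * ((if i == j then lam else 0) - (dcoef theta i j)%:C))%:M)); last first.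
    move=> j _; rewrite cmx_scalar -scale_scalar_mx; congr (_ *: _).
    by case: ifP => _; rewrite raddfB //= raddf0.
  rewrite -raddf_sum /=.
  under eq_bigr do rewrite mulrBr.
  rewrite sumrB Hder (bigD1 i) //= eqxx big1 ?addr0; last first.
    by move=> j; rewrite eq_sym => /negbTE ->; rewrite mulr0.
  by rewrite /thC pd // mulrC subrr raddf0.
have ctrX : ctr (cmx (BN R n N)) *m X = 1%:M.
  rewrite ctr_cmx /BN tr_mxcol cmx_mxrow /X mul_mxrow_mxcol.
  rewrite (bigD1 ord_max) //= big1 ?addr0; last first.
    by move=> j /negbTE ->; rewrite trmx0 cmx0 mul0mx.
  by rewrite eqxx trmx1 cmx_scalar rmorph1 mul1mx /thC Htheta0 p0.
have E : invmx M *m (cmx (BN R n N) *m S) = X.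
  by rewrite -Key mulmxA mulVmx // mul1mx.
rewrite -[LHS]mulmx1 -(mulmxV HR) mulmxA -(mulmxA (_ *m _) _ S) -(mulmxA _ _ (_ *m S)).
by rewrite E ctrX mul1mx.
Qed.
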